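(* Let $\alpha,\nu>0$ and let $u$ be a sufficiently smooth solution of the second grade fluid equations with Dirichlet boundary condition on $\Omega$. Set $v=u-\alpha\Delta u$ and $\gamma_i(t)=\int_{\Gamma_i}v(t)\cdot n^\perp$. Then for every $i\in\{1,\dots,N\}$ and $t\ge0$, $\gamma_i(t)=\gamma_i(0)e^{-\frac\nu\alpha t}$.
   Context: $\Omega\subset\mathbb R^2$ is a smooth bounded domain with $\partial\Omega=\Gamma\cup\Gamma_1\cup\dots\cup\Gamma_N$ ($\Gamma$ the outer boundary component, $\Gamma_1,\dots,\Gamma_N$ the inner components, smooth closed curves); $n$ outward unit normal, $n^\perp$ unit tangent. The second grade fluid equations with Dirichlet boundary condition are $\partial_t(u-\alpha\Delta u)-\nu\Delta u+u\cdot\nabla(u-\alpha\Delta u)+\sum_j(u-\alpha\Delta u)_j\nabla u_j=-\nabla\pi$, $\operatorname{div}u=0$ in $\Omega$, $u|_{\partial\Omega}=0$. *)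

(* Defs.v *)
From Stdlib Require Import Reals Lra List Classical ClassicalEpsilon.
Open Scope R_scope.

(** Derivative of a real function at a point, chosen classically
    (0 if the function is not differentiable there). *)
Definition deriv1 (g : R -> R) (x : R) : R :=
  match excluded_middle_informative (exists l, derivable_pt_lim g x l) with
  | left H => proj1_sig (constructive_indefinite_description _ H)
  | right _ => 0
  end.

(** Scalar fields on (time) x R^2 : f t x y. *)
Definition field3 := R -> R -> R -> R.

Inductive dir := Dt | Dx | Dy.

Definition pdt (f : field3) : field3 := fun t x y => deriv1 (fun s => f s x y) t.
Definition pdx (f : field3) : field3 := fun t x y => deriv1 (fun s => f t s y) x.
Definition pdy (f : field3) : field3 := fun t x y => deriv1 (fun s => f t x s) y.

Definition pd (d : dir) (f : field3) : field3 :=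
  match d with Dt => pdt f | Dx => pdx f | Dy => pdy f end.

Definition has_pd (d : dir) (f : field3) : Prop :=
  forall t x y, exists l,
    match d with
    | Dt => derivable_pt_lim (fun s => f s x y) t l
    | Dx => derivable_pt_lim (fun s => f t s y) x l
    | Dy => derivable_pt_lim (fun s => f t x s) y l
    end.

Fixpoint iter_pd (l : list dir) (f : field3) : field3 :=
  match l with nil => f | d :: l' => pd d (iter_pd l' f) end.

Definition continuous3 (f : field3) : Prop :=
  forall t x y eps, 0 < eps -> exists delta, 0 < delta /\
    forall t' x' y', Rabs (t' - t) < delta -> Rabs (x' - x) < delta ->
      Rabs (y' - y) < delta -> Rabs (f t' x' y' - f t x y) < eps.

Definition smooth3 (f : field3) : Prop :=
  forall l : list dir, continuous3 (iter_pd l f) /\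
    forall d, has_pd d (iter_pd l f).

Definition smooth1 (g : R -> R) : Prop :=
  exists D : nat -> R -> R, D O = g /\
    forall n x, derivable_pt_lim (D n) x (D (S n) x).

Definition laplacian (f : field3) : field3 :=
  fun t x y => pdx (pdx f) t x y + pdy (pdy f) t x y.

Definition vfield (alpha : R) (f : field3) : field3 :=
  fun t x y => f t x y - alpha * laplacian f t x y.

Definition sgf_eq (alpha nu : R) (u1 u2 p : field3) (t x y : R) : Prop :=
  let v1 := vfield alpha u1 in
  let v2 := vfield alpha u2 in
  pdt v1 t x y - nu * laplacian u1 t x y
    + (u1 t x y * pdx v1 t x y + u2 t x y * pdy v1 t x y)
    + (v1 t x y * pdx u1 t x y + v2 t x y * pdx u2 t x y)
    = - pdx p t x y
  /\
  pdt v2 t x y - nu * laplacian u2 t x y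
    + (u1 t x y * pdx v2 t x y + u2 t x y * pdy v2 t x y)
    + (v1 t x y * pdy u1 t x y + v2 t x y * pdy u2 t x y)
    = - pdy p t x y
  /\
  pdx u1 t x y + pdy u2 t x y = 0.

Definition open2 (O : R -> R -> Prop) : Prop :=
  forall x y, O x y -> exists r, 0 < r /\
    forall x' y', (x' - x)^2 + (y' - y)^2 < r^2 -> O x' y'.

Definition bounded2 (O : R -> R -> Prop) : Prop :=
  exists M, forall x y, O x y -> x^2 + y^2 <= M.

Definition connected_open2 (O : R -> R -> Prop) : Prop :=
  forall A B : R -> R -> Prop, open2 A -> open2 B ->
    (forall x y, O x y <-> A x y \/ B x y) ->
    (forall x y, ~ (A x y /\ B x y)) ->
    (forall x y, ~ A x y) \/ (forall x y, ~ B x y).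

Definition closure2 (O : R -> R -> Prop) (x y : R) : Prop :=
  forall eps, 0 < eps -> exists x' y', O x' y' /\ (x' - x)^2 + (y' - y)^2 < eps.

Definition boundary2 (O : R -> R -> Prop) (x y : R) : Prop :=
  closure2 O x y /\ ~ O x y.

Definition smooth_simple_closed_curve (cx cy : R -> R) : Prop :=
  smooth1 cx /\ smooth1 cy /\
  (forall s, cx (s + 1) = cx s /\ cy (s + 1) = cy s) /\
  (forall s, 0 < (deriv1 cx s)^2 + (deriv1 cy s)^2) /\
  (forall s s', 0 <= s < 1 -> 0 <= s' < 1 -> cx s = cx s' -> cy s = cy s' -> s = s').

(** Integrand of the line integral of the field (w1,w2)(t) along the curve
    (cx,cy): (w . c'(s)) ds  =  (w . n^perp) d sigma. *)
Definition circ_integrand (w1 w2 : field3) (cx cy : R -> R) (t : R) : R -> R :=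
  fun s => w1 t (cx s) (cy s) * deriv1 cx s + w2 t (cx s) (cy s) * deriv1 cy s.

(* Main.v *)
Require Import Defs.
From Stdlib Require Import Reals Lra List Classical ClassicalEpsilon FunctionalExtensionality.
From Coquelicot Require Import Coquelicot.
Open Scope R_scope.
Notation Dt := Defs.Dt.
Notation Dx := Defs.Dx.
Notation Dy := Defs.Dy.

Lemma deriv1_eq g x l : derivable_pt_lim g x l -> deriv1 g x = l.
Proof.
  intro H. unfold deriv1.
  destruct (excluded_middle_informative _) as [H1|H1].
  - destruct (constructive_indefinite_description _ H1) as [l' Hl']; simpl.
    eapply uniqueness_limite; eauto.
  - exfalso; apply H1; eauto.
Qed.

Lemma pd_lim f l t x y : smooth3 f ->
  derivable_pt_lim (fun s => iter_pd l f s x y) t (iter_pd (Dt::l) f t x y) /\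
  derivable_pt_lim (fun s => iter_pd l f t s y) x (iter_pd (Dx::l) f t x y) /\
  derivable_pt_lim (fun s => iter_pd l f t x s) y (iter_pd (Dy::l) f t x y).
Proof.
  intro Hf. destruct (Hf l) as [_ Hd].
  repeat split.
  - destruct (Hd Dt t x y) as [L HL]. simpl; unfold pdt; rewrite (deriv1_eq _ _ _ HL); exact HL.
  - destruct (Hd Dx t x y) as [L HL]. simpl; unfold pdx; rewrite (deriv1_eq _ _ _ HL); exact HL.
  - destruct (Hd Dy t x y) as [L HL]. simpl; unfold pdy; rewrite (deriv1_eq _ _ _ HL); exact HL.
Qed.

Definition vexp (alpha : R) (f : field3) (d : dir) : field3 :=
  fun t x y => iter_pd (d::nil) f t x y - alpha * (iter_pd (d::Dx::Dx::nil) f t x y + iter_pd (d::Dy::Dy::nil) f t x y).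

Lemma vfield_alt alpha f t x y : vfield alpha f t x y =
  iter_pd nil f t x y - alpha * (iter_pd (Dx::Dx::nil) f t x y + iter_pd (Dy::Dy::nil) f t x y).
Proof. reflexivity. Qed.

Lemma vfield_lim alpha f t x y : smooth3 f ->
  derivable_pt_lim (fun s => vfield alpha f s x y) t (vexp alpha f Dt t x y) /\
  derivable_pt_lim (fun s => vfield alpha f t s y) x (vexp alpha f Dx t x y) /\
  derivable_pt_lim (fun s => vfield alpha f t x s) y (vexp alpha f Dy t x y).
Proof.
  intro Hf.
  destruct (pd_lim f nil t x y Hf) as [A1 [A2 A3]].
  destruct (pd_lim f (Dx::Dx::nil) t x y Hf) as [B1 [B2 B3]].
  destruct (pd_lim f (Dy::Dy::nil) t x y Hf) as [C1 [C2 C3]].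
  unfold vexp; repeat split.
  - apply derivable_pt_lim_minus; auto. apply derivable_pt_lim_scal. apply derivable_pt_lim_plus; auto.
  - apply derivable_pt_lim_minus; auto. apply derivable_pt_lim_scal. apply derivable_pt_lim_plus; auto.
  - apply derivable_pt_lim_minus; auto. apply derivable_pt_lim_scal. apply derivable_pt_lim_plus; auto.
Qed.

Lemma pd_vfield alpha f t x y : smooth3 f ->
  pdt (vfield alpha f) t x y = vexp alpha f Dt t x y /\
  pdx (vfield alpha f) t x y = vexp alpha f Dx t x y /\
  pdy (vfield alpha f) t x y = vexp alpha f Dy t x y.
Proof.
  intro Hf. destruct (vfield_lim alpha f t x y Hf) as [A [B C]].
  unfold pdt, pdx, pdy; repeat split; apply deriv1_eq; auto.
Qed.

Lemma cont3_2d F t x y : continuous3 F -> continuity_2d_pt (fun x y => F t x y) x y.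
Proof.
  intros HF eps. destruct (HF t x y eps (cond_pos eps)) as [d [Hd H]].
  exists (mkposreal d Hd). intros u v Hu Hv. apply H; simpl in *; auto.
  rewrite Rminus_eq_0, Rabs_R0; auto.
Qed.

Lemma cpt_eps g s : continuity_pt g s -> forall eps, 0 < eps -> exists d, 0 < d /\
   forall s', Rabs (s' - s) < d -> Rabs (g s' - g s) < eps.
Proof.
  intros H eps He. destruct (H eps He) as [d [Hd H']]. exists d; split; auto.
  intros s' Hs'. destruct (Req_dec s' s) as [->|Hne].
  - rewrite Rminus_eq_0, Rabs_R0; auto.
  - apply H'. split; [split; [exact I| auto] | exact Hs'].
Qed.

Lemma cont3_curve F X Y t s : continuous3 F -> continuity_pt X s -> continuity_pt Y s ->
  continuity_2d_pt (fun t s => F t (X s) (Y s)) t s.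
Proof.
  intros HF HX HY eps. destruct (HF t (X s) (Y s) eps (cond_pos eps)) as [d [Hd H]].
  destruct (cpt_eps X s HX d Hd) as [d1 [Hd1 H1]].
  destruct (cpt_eps Y s HY d Hd) as [d2 [Hd2 H2]].
  assert (Hm : 0 < Rmin d (Rmin d1 d2)) by (repeat apply Rmin_pos; auto).
  exists (mkposreal _ Hm). intros u v Hu Hv; simpl in *.
  apply H.
  - apply Rlt_le_trans with (1 := Hu); apply Rmin_l.
  - apply H1. apply Rlt_le_trans with (1 := Hv). eapply Rle_trans; [apply Rmin_r|apply Rmin_l].
  - apply H2. apply Rlt_le_trans with (1 := Hv). eapply Rle_trans; [apply Rmin_r|apply Rmin_r].
Qed.

Lemma cont2d_const2 g t s : continuity_pt g s -> continuity_2d_pt (fun _ s => g s) t s.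
Proof.
  intros Hg eps. destruct (cpt_eps g s Hg eps (cond_pos eps)) as [d [Hd H]].
  exists (mkposreal d Hd). intros u v _ Hv. apply H; auto.
Qed.

Lemma cont2d_sec f t s : continuity_2d_pt f t s -> continuity_pt (fun s => f t s) s.
Proof.
  intros H eps He. destruct (H (mkposreal eps He)) as [d Hd].
  exists d; split; [apply cond_pos|]. intros x [_ Hx]. simpl. unfold R_dist in *.
  apply Hd; auto. rewrite Rminus_eq_0, Rabs_R0; apply cond_pos.
Qed.


Lemma MVT_any f f' a b : (forall c, derivable_pt_lim f c (f' c)) ->
  exists c, f b - f a = f' c * (b - a) /\ Rabs (c - a) <= Rabs (b - a).
Proof.
  intro H. destruct (Rtotal_order a b) as [Hab|[Hab|Hab]].
  - destruct (MVT_cor2 f f' a b Hab (fun c _ => H c)) as [c [E Hc]].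
    exists c; split; auto. rewrite !Rabs_right; lra.
  - subst. exists b. rewrite !Rminus_eq_0; split; [ring| lra].
  - destruct (MVT_cor2 f f' b a Hab (fun c _ => H c)) as [c [E Hc]].
    exists c; split; [lra|]. rewrite !Rabs_left; lra.
Qed.

Lemma diff2 (g gx gy : R -> R -> R) x y :
  (forall u v, derivable_pt_lim (fun z => g z v) u (gx u v)) ->
  (forall u v, derivable_pt_lim (fun z => g u z) v (gy u v)) ->
  continuity_2d_pt gx x y -> continuity_pt (fun v => gy x v) y ->
  differentiable_pt_lim g x y (gx x y) (gy x y).
Proof.
  intros Hx Hy Cx Cy eps.
  assert (He2 : 0 < eps / 2) by (generalize (cond_pos eps); lra).
  destruct (Cx (mkposreal _ He2)) as [d1 H1].
  destruct (cpt_eps _ _ Cy _ He2) as [d2 [Hd2 H2]].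
  assert (Hm : 0 < Rmin d1 d2) by (apply Rmin_pos; auto; apply cond_pos).
  exists (mkposreal _ Hm). intros u v Hu Hv; simpl in *.
  assert (Hu1 : Rabs (u - x) < d1) by (eapply Rlt_le_trans; [exact Hu| apply Rmin_l]).
  assert (Hv1 : Rabs (v - y) < d1) by (eapply Rlt_le_trans; [exact Hv| apply Rmin_l]).
  assert (Hv2 : Rabs (v - y) < d2) by (eapply Rlt_le_trans; [exact Hv| apply Rmin_r]).
  destruct (MVT_any (fun z => g z v) (fun z => gx z v) x u (fun c => Hx c v)) as [c [Ec Hc]].
  destruct (MVT_any (fun z => g x z) (fun z => gy x z) y v (fun c => Hy x c)) as [e [Ee He]].
  simpl in Ec, Ee.
  assert (Q1 : Rabs (gx c v - gx x y) < eps/2) by (apply H1; lra).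
  assert (Q2 : Rabs (gy x e - gy x y) < eps/2) by (apply H2; lra).
  replace (g u v - g x y - (gx x y * (u - x) + gy x y * (v - y)))
    with ((gx c v - gx x y) * (u - x) + (gy x e - gy x y) * (v - y)) by lra.
  eapply Rle_trans; [apply Rabs_triang|]. rewrite !Rabs_mult.
  assert (M1 := Rmax_l (Rabs (u - x)) (Rabs (v - y))).
  assert (M2 := Rmax_r (Rabs (u - x)) (Rabs (v - y))).
  assert (A1 := Rabs_pos (u - x)). assert (A2 := Rabs_pos (v - y)).
  assert (B1 := Rabs_pos (gx c v - gx x y)). assert (B2 := Rabs_pos (gy x e - gy x y)).
  apply Rle_trans with (eps/2 * Rabs (u-x) + eps/2 * Rabs (v - y)).
  - apply Rplus_le_compat; apply Rmult_le_compat_r; lra.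
  - generalize (cond_pos eps); intro. nra.
Qed.

Lemma chain f t s X Y X' Y' : smooth3 f ->
  derivable_pt_lim X s X' -> derivable_pt_lim Y s Y' ->
  derivable_pt_lim (fun s => f t (X s) (Y s)) s
    (pdx f t (X s) (Y s) * X' + pdy f t (X s) (Y s) * Y').
Proof.
  intros Hf HX HY.
  apply (derivable_pt_lim_comp_2d (fun a b => f t a b)); auto.
  apply (diff2 (fun a b => f t a b) (fun a b => pdx f t a b) (fun a b => pdy f t a b)).
  - intros u v. exact (proj1 (proj2 (pd_lim f nil t u v Hf))).
  - intros u v. exact (proj2 (proj2 (pd_lim f nil t u v Hf))).
  - apply (cont3_2d (iter_pd (Dx::nil) f)). exact (proj1 (Hf (Dx::nil))).
  - apply (cont2d_sec (fun a b => iter_pd (Dy::nil) f t a b)).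
    apply (cont3_2d (iter_pd (Dy::nil) f)). exact (proj1 (Hf (Dy::nil))).
Qed.


Lemma dmult_c f x l c : derivable_pt_lim f x l -> derivable_pt_lim (fun y => f y * c) x (l * c).
Proof.
  intro H. replace (l * c) with (l * fct_cte c x + f x * 0) by (unfold fct_cte; ring).
  apply (derivable_pt_lim_mult f (fct_cte c)); auto. apply derivable_pt_lim_const.
Qed.

Ltac c3 H := first [ exact (proj1 (H nil)) | exact (proj1 (H (Dx::nil))) | exact (proj1 (H (Dy::nil)))
  | exact (proj1 (H (Dt::nil))) | exact (proj1 (H (Dx::Dx::nil))) | exact (proj1 (H (Dy::Dy::nil)))
  | exact (proj1 (H (Dt::Dx::Dx::nil))) | exact (proj1 (H (Dt::Dy::Dy::nil)))
  | exact (proj1 (H (Dx::Dx::Dx::nil))) | exact (proj1 (H (Dx::Dy::Dy::nil)))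
  | exact (proj1 (H (Dy::Dx::Dx::nil))) | exact (proj1 (H (Dy::Dy::Dy::nil))) ].

Ltac cont2 H1 H2 H3 := repeat first
  [ apply continuity_2d_pt_minus | apply continuity_2d_pt_plus | apply continuity_2d_pt_opp
  | apply continuity_2d_pt_mult
  | apply continuity_2d_pt_const
  | apply cont3_curve; [ first [c3 H1 | c3 H2 | c3 H3] | auto | auto ]
  | apply cont2d_const2; auto ].

Section Core.
Variables (alpha nu : R) (Ha : 0 < alpha) (u1 u2 p : field3)
  (Hu1 : smooth3 u1) (Hu2 : smooth3 u2) (Hp : smooth3 p)
  (X Y X1 Y1 : R -> R)
  (HX : forall s, derivable_pt_lim X s (X1 s)) (HY : forall s, derivable_pt_lim Y s (Y1 s))
  (CX : forall s, continuity_pt X s) (CY : forall s, continuity_pt Y s)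
  (CX1 : forall s, continuity_pt X1 s) (CY1 : forall s, continuity_pt Y1 s)
  (HperX : X 1 = X 0) (HperY : Y 1 = Y 0)
  (Hz : forall t s, 0 < t -> u1 t (X s) (Y s) = 0 /\ u2 t (X s) (Y s) = 0)
  (HE1 : forall t s, 0 < t -> let x := X s in let y := Y s in
     vexp alpha u1 Dt t x y - nu * laplacian u1 t x y
     + (vfield alpha u1 t x y * pdx u1 t x y + vfield alpha u2 t x y * pdx u2 t x y) + pdx p t x y = 0)
  (HE2 : forall t s, 0 < t -> let x := X s in let y := Y s in
     vexp alpha u2 Dt t x y - nu * laplacian u2 t x y
     + (vfield alpha u1 t x y * pdy u1 t x y + vfield alpha u2 t x y * pdy u2 t x y) + pdy p t x y = 0).

Definition hh t s := vfield alpha u1 t (X s) (Y s) * X1 s + vfield alpha u2 t (X s) (Y s) * Y1 s.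
Definition Hd t s := vexp alpha u1 Dt t (X s) (Y s) * X1 s + vexp alpha u2 Dt t (X s) (Y s) * Y1 s.
Definition Dq t s := pdx p t (X s) (Y s) * X1 s + pdy p t (X s) (Y s) * Y1 s.

Lemma hh_der t s : derivable_pt_lim (fun u => hh u s) t (Hd t s).
Proof.
  unfold hh, Hd. apply derivable_pt_lim_plus; apply dmult_c.
  - exact (proj1 (vfield_lim alpha u1 t _ _ Hu1)).
  - exact (proj1 (vfield_lim alpha u2 t _ _ Hu2)).
Qed.

Lemma hh_cont t s : continuity_2d_pt hh t s.
Proof. unfold hh, vfield, laplacian. cont2 Hu1 Hu2 Hp. Qed.

Lemma Hd_cont t s : continuity_2d_pt Hd t s.
Proof. unfold Hd, vexp. cont2 Hu1 Hu2 Hp. Qed.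

Lemma Dq_cont t s : continuity_2d_pt Dq t s.
Proof. unfold Dq. cont2 Hu1 Hu2 Hp. Qed.

Lemma cont_ex f : (forall z, continuity_pt f z) -> ex_RInt f 0 1.
Proof.
  intro H. apply (@ex_RInt_continuous R_CompleteNormedModule). intros z _. apply continuity_pt_filterlim. apply H.
Qed.

Lemma ex_hh t : ex_RInt (hh t) 0 1.
Proof. apply cont_ex. intro z. apply (cont2d_sec hh t z). apply hh_cont. Qed.
Lemma ex_Hd t : ex_RInt (Hd t) 0 1.
Proof. apply cont_ex. intro z. apply (cont2d_sec Hd t z). apply Hd_cont. Qed.
Lemma ex_Dq t : ex_RInt (Dq t) 0 1.
Proof. apply cont_ex. intro z. apply (cont2d_sec Dq t z). apply Dq_cont. Qed.

Lemma Hd_Derive t s : Derive (fun u => hh u s) t = Hd t s.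
Proof. apply is_derive_unique. apply is_derive_Reals. apply hh_der. Qed.

Lemma gam_der t : is_derive (fun t => RInt (hh t) 0 1) t (RInt (Hd t) 0 1).
Proof.
  assert (K := is_derive_RInt_param hh 0 1 t).
  assert (E : RInt (fun s => Derive (fun u => hh u s) t) 0 1 = RInt (Hd t) 0 1).
  { apply RInt_ext. intros; apply Hd_Derive. }
  rewrite <- E. apply K.
  - apply filter_forall. intros x s _. exists (Hd x s). apply is_derive_Reals, hh_der.
  - intros s _. apply continuity_2d_pt_ext with (f := Hd).
    + intros; symmetry; apply Hd_Derive.
    + apply Hd_cont.
  - apply filter_forall. intro; apply ex_hh.
Qed.

Lemma tang f t s : smooth3 f -> (forall s, f t (X s) (Y s) = 0) ->
  pdx f t (X s) (Y s) * X1 s + pdy f t (X s) (Y s) * Y1 s = 0.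
Proof.
  intros Hf H0. assert (K := chain f t s X Y (X1 s) (Y1 s) Hf (HX s) (HY s)).
  assert (E : (fun s => f t (X s) (Y s)) = fct_cte 0).
  { apply functional_extensionality; intro; apply H0. }
  rewrite E in K. eapply uniqueness_limite; [exact K| apply derivable_pt_lim_const].
Qed.

Lemma key t s : 0 < t -> Hd t s = - (nu / alpha) * hh t s - Dq t s.
Proof.
  intro Ht.
  assert (T1 := tang u1 t s Hu1 (fun s => proj1 (Hz t s Ht))).
  assert (T2 := tang u2 t s Hu2 (fun s => proj2 (Hz t s Ht))).
  assert (E1 := HE1 t s Ht). assert (E2 := HE2 t s Ht). simpl in E1, E2.
  destruct (Hz t s Ht) as [Z1 Z2].
  assert (V1 : vfield alpha u1 t (X s) (Y s) = - alpha * laplacian u1 t (X s) (Y s))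
    by (unfold vfield; rewrite Z1; ring).
  assert (V2 : vfield alpha u2 t (X s) (Y s) = - alpha * laplacian u2 t (X s) (Y s))
    by (unfold vfield; rewrite Z2; ring).
  unfold Hd, hh, Dq.
  set (A := vexp alpha u1 Dt t (X s) (Y s)) in *.
  set (B := vexp alpha u2 Dt t (X s) (Y s)) in *.
  set (v1 := vfield alpha u1 t (X s) (Y s)) in *.
  set (v2 := vfield alpha u2 t (X s) (Y s)) in *.
  set (L1 := laplacian u1 t (X s) (Y s)) in *.
  set (L2 := laplacian u2 t (X s) (Y s)) in *.
  assert (EA : A = nu * L1 - (v1 * pdx u1 t (X s) (Y s) + v2 * pdx u2 t (X s) (Y s)) - pdx p t (X s) (Y s)) by lra.
  assert (EB : B = nu * L2 - (v1 * pdy u1 t (X s) (Y s) + v2 * pdy u2 t (X s) (Y s)) - pdy p t (X s) (Y s)) by lra.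
  rewrite EA, EB.
  assert (D : forall a b : R, a - b = 0 -> a = b) by (intros; lra).
  apply D.
  transitivity (- v1 * (pdx u1 t (X s) (Y s) * X1 s + pdy u1 t (X s) (Y s) * Y1 s)
                - v2 * (pdx u2 t (X s) (Y s) * X1 s + pdy u2 t (X s) (Y s) * Y1 s)).
  - rewrite V1, V2. field. lra.
  - rewrite T1, T2. ring.
Qed.

Lemma Dq_int t : RInt (Dq t) 0 1 = 0.
Proof.
  assert (DE : forall s, is_derive (fun s => p t (X s) (Y s)) s (Dq t s)).
  { intro s. apply is_derive_Reals. apply chain; auto. }
  rewrite (RInt_ext (Dq t) (Derive (fun s => p t (X s) (Y s)))).
  - rewrite RInt_Derive.
    + rewrite HperX, HperY. change (p t (X 0) (Y 0) - p t (X 0) (Y 0) = 0). ring.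
    + intros x _. eexists; apply DE.
    + intros x _. apply continuity_pt_filterlim.
      assert (E : Derive (fun s => p t (X s) (Y s)) = Dq t).
      { apply functional_extensionality; intro; apply is_derive_unique, DE. }
      rewrite E. apply (cont2d_sec Dq t x). apply Dq_cont.
  - intros x _. symmetry; apply is_derive_unique, DE.
Qed.

Lemma Hd_int t : 0 < t -> RInt (Hd t) 0 1 = - (nu / alpha) * RInt (hh t) 0 1.
Proof.
  intro Ht.
  assert (E1 : RInt (Hd t) 0 1 = RInt (fun s => minus (scal (- (nu/alpha)) (hh t s)) (Dq t s)) 0 1).
  { apply RInt_ext. intros x _. rewrite key by auto. reflexivity. }
  assert (E2 := @RInt_minus R_CompleteNormedModule (fun s => scal (- (nu/alpha)) (hh t s)) (Dq t) 0 1
     (@ex_RInt_scal R_CompleteNormedModule (hh t) 0 1 (- (nu/alpha)) (ex_hh t)) (ex_Dq t)).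
  assert (E3 := @RInt_scal R_CompleteNormedModule (hh t) 0 1 (- (nu/alpha)) (ex_hh t)).
  rewrite E1. etransitivity; [apply E2|].
  assert (E4 := Dq_int t).
  unfold minus, scal, plus, opp in *; simpl in *. unfold mult in *; simpl in *.
  rewrite E4, Ropp_0, Rplus_0_r. apply E3.
Qed.

Lemma ode t : 0 <= t -> RInt (hh t) 0 1 = RInt (hh 0) 0 1 * exp (- (nu / alpha) * t).
Proof.
  intro Ht. set (k := nu / alpha).
  set (G := fun t => RInt (hh t) 0 1 * exp (k * t)).
  assert (GD : forall c, derivable_pt_lim G c (RInt (Hd c) 0 1 * exp (k * c) + RInt (hh c) 0 1 * (k * exp (k * c)))).
  { intro c. unfold G.
    replace (RInt (Hd c) 0 1 * exp (k * c) + RInt (hh c) 0 1 * (k * exp (k * c))) with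
      (RInt (Hd c) 0 1 * exp (k * c) + RInt (hh c) 0 1 * (exp (k * c) * (k * 1))) by ring.
    apply (derivable_pt_lim_mult (fun t => RInt (hh t) 0 1) (fun t => exp (k * t))).
    - apply is_derive_Reals, gam_der.
    - apply (derivable_pt_lim_comp (fun t => k * t) exp).
      + apply derivable_pt_lim_scal, derivable_pt_lim_id.
      + apply derivable_pt_lim_exp. }
  assert (G0 : G t = G 0).
  { destruct (Rle_lt_or_eq_dec 0 t Ht) as [Hlt| <-]; [|reflexivity].
    destruct (MVT_cor2 G _ 0 t Hlt (fun c _ => GD c)) as [c [Ec Hc]].
    rewrite Hd_int in Ec by lra. unfold k in *. 
    assert (Z : - (nu / alpha) * RInt (hh c) 0 1 * exp (nu / alpha * c) + RInt (hh c) 0 1 * (nu / alpha * exp (nu / alpha * c)) = 0) by ring.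
    rewrite Z in Ec. lra. }
  unfold G in G0. cbv beta in G0. rewrite Rmult_0_r, exp_0, Rmult_1_r in G0.
  rewrite <- G0. rewrite Rmult_assoc, <- exp_plus.
  replace (k * t + - k * t) with 0 by ring. rewrite exp_0. exact (eq_sym (Rmult_1_r _)).
Qed.
End Core.


Lemma closure_zero (O : R -> R -> Prop) (F : R -> R -> R) x y :
  continuity_2d_pt F x y -> (forall a b, O a b -> F a b = 0) -> closure2 O x y -> F x y = 0.
Proof.
  intros C H Cl. destruct (Req_dec (F x y) 0) as [|Hne]; auto. exfalso.
  assert (Hp : 0 < Rabs (F x y)) by (apply Rabs_pos_lt; auto).
  destruct (C (mkposreal _ Hp)) as [d Hd].
  assert (Hd2 : 0 < d * d) by (apply Rmult_lt_0_compat; apply cond_pos).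
  destruct (Cl _ Hd2) as [a [b [Oab Hab]]].
  assert (K : Rabs (F a b - F x y) < Rabs (F x y)).
  { assert (S1 : (a - x)^2 < d * d) by (generalize (pow2_ge_0 (b-y)); lra).
    assert (S2 : (b - y)^2 < d * d) by (generalize (pow2_ge_0 (a-x)); lra).
    assert (dp := cond_pos d).
    apply Hd.
    - apply Rabs_def1.
      + destruct (Rlt_or_le (a - x) d); auto. nra.
      + destruct (Rlt_or_le (- d) (a - x)); auto. nra.
    - apply Rabs_def1.
      + destruct (Rlt_or_le (b - y) d); auto. nra.
      + destruct (Rlt_or_le (- d) (b - y)); auto. nra. }
  rewrite (H a b Oab) in K. rewrite Rminus_0_l, Rabs_Ropp in K. lra.
Qed.

Ltac c2 H1 H2 H3 := repeat first
  [ apply continuity_2d_pt_minus | apply continuity_2d_pt_plus | apply continuity_2d_pt_opp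
  | apply continuity_2d_pt_mult
  | apply continuity_2d_pt_const
  | apply cont3_2d; first [c3 H1 | c3 H2 | c3 H3] ].

Lemma smooth1_facts g : smooth1 g -> exists g1, (forall s, derivable_pt_lim g s (g1 s)) /\
  (forall s, continuity_pt g s) /\ (forall s, continuity_pt g1 s) /\ deriv1 g = g1.
Proof.
  intros [D [D0 HD]]. subst g. exists (D 1%nat). repeat split.
  - intro s; apply HD.
  - intro s; apply derivable_continuous_pt. exists (D 1%nat s). apply HD.
  - intro s; apply derivable_continuous_pt. exists (D 2%nat s). apply HD.
  - apply functional_extensionality; intro s; apply deriv1_eq, HD.
Qed.

Theorem lemma6p4
  (alpha nu : R) (Halpha : 0 < alpha) (Hnu : 0 < nu)
  (Omega : R -> R -> Prop) (N : nat) (cx cy : nat -> R -> R)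
  (HOopen : open2 Omega) (HObdd : bounded2 Omega) (HOconn : connected_open2 Omega)
  (Hcurves : forall i, (i <= N)%nat -> smooth_simple_closed_curve (cx i) (cy i))
  (Hdisj : forall i j s s', (i <= N)%nat -> (j <= N)%nat -> i <> j ->
             ~ (cx i s = cx j s' /\ cy i s = cy j s'))
  (Hbdry : forall x y, boundary2 Omega x y <->
             exists i s, (i <= N)%nat /\ x = cx i s /\ y = cy i s)
  (Houter : exists s0, forall i s, (i <= N)%nat ->
             (cx i s)^2 + (cy i s)^2 <= (cx 0%nat s0)^2 + (cy 0%nat s0)^2)
  (u1 u2 p : field3)
  (Hu1 : smooth3 u1) (Hu2 : smooth3 u2) (Hp : smooth3 p)
  (Heq : forall t x y, 0 < t -> Omega x y -> sgf_eq alpha nu u1 u2 p t x y)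
  (HDir : forall t x y, 0 < t -> boundary2 Omega x y -> u1 t x y = 0 /\ u2 t x y = 0) :
  forall i, (1 <= i <= N)%nat -> forall t, 0 <= t ->
    exists (prt : Riemann_integrable
                    (circ_integrand (vfield alpha u1) (vfield alpha u2) (cx i) (cy i) t) 0 1)
           (pr0 : Riemann_integrable
                    (circ_integrand (vfield alpha u1) (vfield alpha u2) (cx i) (cy i) 0) 0 1),
      RiemannInt prt = RiemannInt pr0 * exp (- (nu / alpha) * t).
Proof.
  intros i Hi t Ht.
  assert (HiN : (i <= N)%nat) by (destruct Hi; auto).
  destruct (Hcurves i HiN) as [SX [SY [Hper _]]].
  destruct (smooth1_facts _ SX) as [X1 [HX [CX [CX1 EX]]]].
  destruct (smooth1_facts _ SY) as [Y1 [HY [CY [CY1 EY]]]].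
  assert (Bd : forall s, boundary2 Omega (cx i s) (cy i s)).
  { intro s. apply Hbdry. exists i, s. auto. }
  assert (Hz : forall t s, 0 < t -> u1 t (cx i s) (cy i s) = 0 /\ u2 t (cx i s) (cy i s) = 0).
  { intros; apply HDir; auto. }
  assert (EC : forall t, circ_integrand (vfield alpha u1) (vfield alpha u2) (cx i) (cy i) t =
                         hh alpha u1 u2 (cx i) (cy i) X1 Y1 t).
  { intro; unfold circ_integrand, hh; rewrite EX, EY; reflexivity. }
  rewrite !EC.
  exists (ex_RInt_Reals_0 _ _ _ (ex_hh alpha u1 u2 Hu1 Hu2 _ _ _ _ CX CY CX1 CY1 t)).
  exists (ex_RInt_Reals_0 _ _ _ (ex_hh alpha u1 u2 Hu1 Hu2 _ _ _ _ CX CY CX1 CY1 0)).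
  rewrite <- !RInt_Reals.
  apply (ode alpha nu Halpha u1 u2 p Hu1 Hu2 Hp _ _ _ _ HX HY CX CY CX1 CY1); auto.
  - destruct (Hper 0) as [E _]. rewrite Rplus_0_l in E. exact E.
  - destruct (Hper 0) as [_ E]. rewrite Rplus_0_l in E. exact E.
  - intros t0 s Ht0 x y.
    set (F := fun a b => vexp alpha u1 Dt t0 a b - nu * laplacian u1 t0 a b
      + (u1 t0 a b * vexp alpha u1 Dx t0 a b + u2 t0 a b * vexp alpha u1 Dy t0 a b)
      + (vfield alpha u1 t0 a b * pdx u1 t0 a b + vfield alpha u2 t0 a b * pdx u2 t0 a b) + pdx p t0 a b).
    assert (F0 : F x y = 0).
    { apply (closure_zero Omega F x y).
      - unfold F, vexp, vfield, laplacian. c2 Hu1 Hu2 Hp.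
      - intros a b Oab. destruct (Heq t0 a b Ht0 Oab) as [E1 _].
        destruct (pd_vfield alpha u1 t0 a b Hu1) as [P1 [P2 P3]].
        unfold F. rewrite <- P1, <- P2, <- P3. lra.
      - exact (proj1 (Bd s)). }
    destruct (Hz t0 s Ht0) as [Z1 Z2]. unfold F in F0. unfold x, y in *.
    rewrite Z1, Z2 in F0. lra.
  - intros t0 s Ht0 x y.
    set (F := fun a b => vexp alpha u2 Dt t0 a b - nu * laplacian u2 t0 a b
      + (u1 t0 a b * vexp alpha u2 Dx t0 a b + u2 t0 a b * vexp alpha u2 Dy t0 a b)
      + (vfield alpha u1 t0 a b * pdy u1 t0 a b + vfield alpha u2 t0 a b * pdy u2 t0 a b) + pdy p t0 a b).
    assert (F0 : F x y = 0).
    { apply (closure_zero Omega F x y).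
      - unfold F, vexp, vfield, laplacian. c2 Hu1 Hu2 Hp.
      - intros a b Oab. destruct (Heq t0 a b Ht0 Oab) as [_ [E2 _]].
        destruct (pd_vfield alpha u2 t0 a b Hu2) as [P1 [P2 P3]].
        unfold F. rewrite <- P1, <- P2, <- P3. lra.
      - exact (proj1 (Bd s)). }
    destruct (Hz t0 s Ht0) as [Z1 Z2]. unfold F in F0. unfold x, y in *.
    rewrite Z1, Z2 in F0. lra.
Qed.
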